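(* For a $d$-regular simple graph ($d\ge3$) quantised with equi-transmitting scattering matrices, every $g\in G_2$ satisfies $$\|Mg\|_{\mathbb{C}^{2B}}=\frac{\|g\|_{\mathbb{C}^{2B}}}{d-1}.$$
   Context: For directed bond $b$, $o(b),t(b)$ are origin and terminus, $\bar b$ its reversal. For equi-transmitting quantisation, $M$ is the $2B\times2B$ matrix with $M_{bc}=\frac1{d-1}$ if $t(b)=o(c)$ and $c\ne\bar b$, and $0$ otherwise. $e_v\in\mathbb{C}^{2B}$ has component $1$ on each directed bond with origin $v$, $0$ elsewhere; $G_1=\mathrm{span}\{e_v\}$ and $G_2=G_1^{\perp}$ (orthogonal complement in $\mathbb{C}^{2B}$). *)

(* Defs.v *)
From HB Require Import structures.
From mathcomp Require Import all_boot all_order all_algebra all_field.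
Set Implicit Arguments. Unset Strict Implicit. Unset Printing Implicit Defensive.
Import Order.TTheory GRing.Theory Num.Theory.
Local Open Scope ring_scope.

(* Directed bonds are ordered pairs (u,v) with e u v;
   their type is {p : T * T | e p.1 p.2} (a finType with 2B elements). *)
Definition simple_graph (T : finType) (e : rel T) : Prop :=
  symmetric e /\ irreflexive e.

Definition regular (T : finType) (e : rel T) (d : nat) : Prop :=
  forall v : T, #|[set w | e v w]| = d.

Section Bonds.
Variables (T : finType) (e : rel T).
Notation bond := {p : T * T | e p.1 p.2}.

Definition orig (b : bond) : T := (val b).1.
Definition term (b : bond) : T := (val b).2.
Definition is_rev (b c : bond) : bool := val c == (term b, orig b).

Definition Mmat (d : nat) (b c : bond) : algC :=
  if (term b == orig c) && ~~ is_rev b c then (d.-1)%:R^-1 else 0.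

Definition Mapp (d : nat) (g : bond -> algC) : bond -> algC :=
  fun b => \sum_c Mmat d b c * g c.

Definition cdot (f g : bond -> algC) : algC := \sum_b f b * (g b)^*.
Definition cnorm (g : bond -> algC) : algC := sqrtC (\sum_b `|g b| ^+ 2).

Definition evec (v : T) : bond -> algC := fun b => if orig b == v then 1 else 0.

Definition inG1 (x : bond -> algC) : Prop :=
  exists a : T -> algC, forall b, x b = \sum_v a v * evec v b.
Definition inG2 (g : bond -> algC) : Prop :=
  forall x, inG1 x -> cdot x g = 0.
End Bonds.

(* Main.v *)
Require Import Defs.
From HB Require Import structures.
From mathcomp Require Import all_boot all_order all_algebra all_field.
Import Order.TTheory GRing.Theory Num.Theory.
Local Open Scope ring_scope.

Section Aux.
Variables (T : finType) (e : rel T) (He : symmetric e).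
Notation bond := {p : T * T | e p.1 p.2}.

Lemma rev_proof (b : bond) : e (term b) (orig b).
Proof. by rewrite He; exact: (valP b). Qed.

Definition rev (b : bond) : bond :=
  exist (fun p : T * T => e p.1 p.2) (term b, orig b) (rev_proof b).

Lemma revK : involutive rev.
Proof. by move=> b; apply: val_inj; case: b => [[x y] h]. Qed.

Lemma is_revE b c : is_rev b c = (c == rev b).
Proof. by rewrite /is_rev -val_eqE. Qed.

Lemma orig_rev b : orig (rev b) = term b. Proof. by []. Qed.
End Aux.
Arguments rev {T e} He b.
Arguments revK {T e} He x.
Arguments is_revE {T e} He b c.
Arguments orig_rev {T e} He b.

Theorem lemma10 (T : finType) (e : rel T) (d : nat)
  (Hsimple : simple_graph e) (Hreg : regular e d) (Hd : (3 <= d)%N)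
  (g : {p : T * T | e p.1 p.2} -> algC) :
  inG2 g ->
  cnorm (Mapp d g) = cnorm g / (d.-1)%:R.
Proof.
move=> HG.
have He : symmetric e by case: Hsimple.
set k : algC := (d.-1)%:R.
have k0 : k != 0 by rewrite pnatr_eq0 -lt0n; move: Hd; clear; case: d => [|[|]].
have S0 : forall v, \sum_(c | orig c == v) g c = 0.
  move=> v.
  have H1 : inG1 (evec (e:=e) v).
    exists (fun w => if w == v then 1 else 0) => b.
    rewrite (bigD1 v) //= eqxx mul1r big1 ?addr0 // => w /negbTE ->.
    by rewrite mul0r.
  have := HG _ H1; rewrite /cdot.
  rewrite (eq_bigr (fun b => if orig b == v then (g b)^* else 0)); last first.
    by move=> b _; rewrite /evec; case: ifP; rewrite ?mul1r ?mul0r.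
  rewrite -big_mkcond /= -rmorph_sum => /eqP.
  by rewrite conjC_eq0 => /eqP.
have HM : forall b, Mapp d g b = - (g (rev He b)) / k.
  move=> b; rewrite /Mapp /Mmat.
  rewrite (eq_bigr (fun c => k^-1 * (if (term b == orig c) && ~~ is_rev b c
                                  then g c else 0))); last first.
    by move=> c _; case: ifP; rewrite ?mulr0 ?mul0r.
  rewrite -mulr_sumr -big_mkcond /=.
  have := S0 (term b).
  rewrite (bigD1 (rev He b)) /=; last by rewrite orig_rev.
  move/eqP; rewrite addrC addr_eq0 => /eqP HS.
  rewrite mulrC; congr (_ * _).
  rewrite -HS; apply: eq_bigl => c.
  by rewrite is_revE eq_sym.
rewrite /cnorm.
rewrite (eq_bigr (fun b => (`|g (rev He b)| ^+ 2) * (k^-1) ^+ 2)); last first.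
  move=> b _; rewrite HM -exprMn normrM normrN; congr (_ ^+ 2).
  by rewrite ger0_norm // invr_ge0 ler0n.
rewrite -mulr_suml.
rewrite (reindex_inj (can_inj (revK He))) /=.
rewrite (eq_bigr (fun b => `|g b| ^+ 2)); last by move=> b _; rewrite revK.
rewrite sqrtCM ?sqrCK //.
- by rewrite invr_ge0 ler0n.
- by rewrite qualifE /=; apply: sumr_ge0 => i _; rewrite exprn_ge0.
- by rewrite qualifE /= exprn_ge0 // invr_ge0 ler0n.
Qed.
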